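(* Let $n\ge 2$, $d\in\mathbb{R}$, $a\in\mathbb{R}_+^n$ (all $a_i>0$), $b\in\mathbb{R}^n$, and consider the problem of minimizing $f(x)=\sum_{i=1}^n \left(\tfrac12 a_i x_i^2+b_i x_i\right)$ over $x\in\mathbb{R}^n$ subject to $\sum_{i=1}^n x_i=d$. Let $H=\mathrm{diag}(a_1,\dots,a_n)$. Let $L\in\mathbb{R}^{n\times n}$ be the weighted Laplacian of an undirected connected graph on $n$ nodes (so $L=L^\top\succeq 0$, $L\mathbf{1}_n=0$, and $0$ is a simple eigenvalue of $L$). Assume there exists $\varepsilon\in[0,1)$ such that $-\varepsilon I_{n-1}\preceq I_{n-1}-U^\top LHL\,U\preceq \varepsilon I_{n-1}$, where $U\in\mathbb{R}^{n\times(n-1)}$ is any matrix whose columns form an orthonormal basis of $\mathbf{1}_n^\perp$. Fix $q\in\{0,1,2,\dots\}$ and an initial point $x^0$ with $\sum_i x^0_i=d$, and define the iteration $$x^{k+1}=x^k-L\sum_{p=0}^{q}(I_n-LHL)^p\,(Lb+LHx^k),\qquad k\ge 0.$$ Then the problem has a unique optimal solution $x^\star$, every iterate satisfies $\sum_i x^k_i=d$, and $x^\star$ is globally exponentially stable for this iteration: there exist a positive definite quadratic function $V$ on the affine set $\{x:\sum_i x_i=d\}$ with $V(x^\star)=0$ and a constant $\hat c\in(0,1)$ independent of $k$ and $x^0$ such that $V(x^{k+1})\le (1-\hat c)V(x^k)$ for all $k$; in particular $x^k\to x^\star$ exponentially fast.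
   Context: This iteration is the ''distributed approx-Newton'' algorithm (DANA) with unit step size: the term $-\sum_{p=0}^q(I_n-LHL)^p(Lb+LHx^k)$ is a truncated Taylor-series ($q$-approximation) of a Newton step for the reformulated unconstrained problem $\min_z f(x^k+Lz)$. $\mathbf{1}_n$ denotes the all-ones vector and $\mathbf{1}_n^\perp$ its orthogonal complement. *)

(* Defs.v *)
From HB Require Import structures.
From mathcomp Require Import all_boot all_order all_algebra.
Set Implicit Arguments. Unset Strict Implicit. Unset Printing Implicit Defensive.
Import Order.TTheory GRing.Theory Num.Theory.
Local Open Scope ring_scope.

Section Defs.
Variable R : realFieldType.

Definition qform (m : nat) (A : 'M[R]_m) (v : 'cV[R]_m) : R := (v^T *m A *m v) 0 0.

Definition psd (m : nat) (A : 'M[R]_m) : Prop := forall v : 'cV[R]_m, 0 <= qform A v.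
Definition loewner_le (m : nat) (A B : 'M[R]_m) : Prop := psd (B - A).

(* weighted Laplacian of the graph with (symmetric, nonnegative) weight matrix w;
   diagonal entries of w (self-loops) are ignored *)
Definition laplacian (n : nat) (w : 'M[R]_n) : 'M[R]_n :=
  \matrix_(i, j) (if i == j then \sum_(k | k != i) w i k else - w i j).

Definition weighted_graph (n : nat) (w : 'M[R]_n) : Prop :=
  w^T = w /\ forall i j, 0 <= w i j.

Definition connected_graph (n : nat) (w : 'M[R]_n) : Prop :=
  forall i j : 'I_n, connect (fun k l => 0 < w k l) i j.

Definition csum (n : nat) (x : 'cV[R]_n) : R := \sum_i x i 0.

Definition fobj (n : nat) (a b x : 'cV[R]_n) : R :=
  \sum_i (2^-1 * a i 0 * x i 0 ^+ 2 + b i 0 * x i 0).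

Definition Hmat (n : nat) (a : 'cV[R]_n) : 'M[R]_n := diag_mx a^T.

Definition dana_step (n : nat) (L H : 'M[R]_n) (b : 'cV[R]_n) (q : nat)
    (x : 'cV[R]_n) : 'cV[R]_n :=
  x - L *m (\sum_(p < q.+1) (1%:M - L *m H *m L) ^+ p) *m (L *m b + L *m H *m x).

Definition dana_iter (n : nat) (L H : 'M[R]_n) (b : 'cV[R]_n) (q : nat)
    (x0 : 'cV[R]_n) (k : nat) : 'cV[R]_n :=
  iter k (dana_step L H b q) x0.

End Defs.

(* Main.v *)
Require Import Defs.
From HB Require Import structures.
From mathcomp Require Import all_boot all_order all_algebra.
From mathcomp Require Import ring lra.
Import Order.TTheory GRing.Theory Num.Theory.
Local Open Scope ring_scope.
Set Implicit Arguments. Unset Strict Implicit. Unset Printing Implicit Defensive.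

Section Aux.
Variable R : realFieldType.

Definition dot (p : nat) (u v : 'cV[R]_p) : R := (u^T *m v) 0 0.

Lemma dotE p (u v : 'cV[R]_p) : dot u v = \sum_i u i 0 * v i 0.
Proof. by rewrite /dot !mxE; apply: eq_bigr => i _; rewrite mxE. Qed.

Lemma dotC p (u v : 'cV[R]_p) : dot u v = dot v u.
Proof. by rewrite !dotE; apply: eq_bigr => i _; rewrite mulrC. Qed.

Lemma dotDl p (u v w : 'cV[R]_p) : dot (u + v) w = dot u w + dot v w.
Proof. by rewrite !dotE -big_split; apply: eq_bigr => i _; rewrite mxE mulrDl. Qed.

Lemma dotZl p c (u w : 'cV[R]_p) : dot (c *: u) w = c * dot u w.
Proof. by rewrite !dotE mulr_sumr; apply: eq_bigr => i _; rewrite mxE mulrA. Qed.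

Lemma dotNl p (u w : 'cV[R]_p) : dot (- u) w = - dot u w.
Proof. by rewrite -scaleN1r dotZl mulN1r. Qed.

Lemma dotBl p (u v w : 'cV[R]_p) : dot (u - v) w = dot u w - dot v w.
Proof. by rewrite dotDl dotNl. Qed.

Lemma dotDr p (u v w : 'cV[R]_p) : dot w (u + v) = dot w u + dot w v.
Proof. by rewrite !(dotC w) dotDl. Qed.

Lemma dotZr p c (u w : 'cV[R]_p) : dot w (c *: u) = c * dot w u.
Proof. by rewrite !(dotC w) dotZl. Qed.

Lemma dotNr p (u w : 'cV[R]_p) : dot w (- u) = - dot w u.
Proof. by rewrite !(dotC w) dotNl. Qed.

Lemma dotBr p (u v w : 'cV[R]_p) : dot w (u - v) = dot w u - dot w v.
Proof. by rewrite dotDr dotNr. Qed.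

Lemma dot0l p (u : 'cV[R]_p) : dot 0 u = 0.
Proof. by rewrite -(scale0r (0 : 'cV[R]_p)) dotZl mul0r. Qed.

Lemma dot0r p (u : 'cV[R]_p) : dot u 0 = 0.
Proof. by rewrite dotC dot0l. Qed.

Lemma dot_mulmx p q (A : 'M[R]_(q, p)) u v : dot (A *m u) v = dot u (A^T *m v).
Proof. by rewrite /dot trmx_mul mulmxA. Qed.

Lemma dot_mulmxr p q (A : 'M[R]_(q, p)) u v : dot u (A *m v) = dot (A^T *m u) v.
Proof. by rewrite dot_mulmx trmxK. Qed.

Lemma dot_ge0 p (u : 'cV[R]_p) : 0 <= dot u u.
Proof. by rewrite dotE sumr_ge0 // => i _; rewrite -expr2 sqr_ge0. Qed.

Lemma dot_eq0 p (u : 'cV[R]_p) : dot u u = 0 -> u = 0.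
Proof.
rewrite dotE => h.
have sq : forall i : 'I_p, true -> 0 <= u i 0 * u i 0.
  by move=> i _; rewrite -expr2 sqr_ge0.
have h' := psumr_eq0P sq h.
apply/matrixP => i j; rewrite (ord1 j) mxE.
by apply/eqP; rewrite -sqrf_eq0 expr2 h'.
Qed.

Lemma dot_gt0 p (u : 'cV[R]_p) : u != 0 -> 0 < dot u u.
Proof.
move=> hu; rewrite lt_def dot_ge0 andbT; apply/eqP => /dot_eq0 h.
by rewrite h eqxx in hu.
Qed.

Lemma qformE p (A : 'M[R]_p) v : qform A v = dot v (A *m v).
Proof. by rewrite /qform /dot mulmxA. Qed.

Lemma contract p (B : 'M[R]_p) eps : B^T = B -> 0 <= eps ->
  psd (B + eps%:M) -> psd (eps%:M - B) ->
  forall x, dot (B *m x) (B *m x) <= eps ^+ 2 * dot x x.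
Proof.
move=> hs he hp hm.
have cross : forall u v, 4 * dot u (B *m v) <= 2 * eps * (dot u u + dot v v).
  move=> u v.
  have h1 := hm (u + v); have h2 := hp (u - v).
  rewrite qformE mulmxBl mul_scalar_mx in h1.
  rewrite qformE mulmxDl mul_scalar_mx in h2.
  have sy : dot v (B *m u) = dot u (B *m v).
    by rewrite dot_mulmxr hs dotC.
  move: h1 h2.
  rewrite !(mulmxDr, mulmxBr, dotDl, dotDr, dotBl, dotBr, dotZr, scalerDr, scalerBr, mulmxN, dotNl, dotNr, opprD).
  move=> h1 h2. rewrite sy in h1 h2.
  set a := dot u u in h1 h2 *; set b := dot v v in h1 h2 *.
  set c := dot u (B *m v) in h1 h2 *.
  set d1 := dot u (B *m u) in h1 h2 *; set d2 := dot v (B *m v) in h1 h2 *.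
  rewrite (dotC v u) in h1 h2.
  set f := dot u v in h1 h2. nra.
move=> x.
have ha := dot_ge0 (B *m x); have hb := dot_ge0 x.
have [e0|epos] := eqVneq eps 0.
  have := cross (B *m x) x.
  rewrite dot_mulmxr hs e0 mulr0 mul0r expr0n /= mul0r; nra.
have ep : 0 < eps by rewrite lt_def epos he.
have := cross (B *m x) (eps *: x).
rewrite -scalemxAr dotZr !dotZl !dotZr.
move=> h.
have : eps * dot (B *m x) (B *m x) <= eps * (eps ^+ 2 * dot x x) by nra.
by rewrite ler_pM2l.
Qed.

End Aux.

Section Aux2.
Variable R : realFieldType.
Local Notation one n := (const_mx 1 : 'cV[R]_n).

Lemma lap_sym n (w : 'M[R]_n) : w^T = w -> (laplacian w)^T = laplacian w.
Proof.
move=> hw; apply/matrixP => i j; rewrite !mxE eq_sym.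
case: eqP => [->|_] //.
by have := congr1 (fun M : 'M[R]_n => M i j) hw; rewrite mxE => ->.
Qed.

Lemma lap_one n (w : 'M[R]_n) : laplacian w *m one n = 0.
Proof.
apply/matrixP => i j; rewrite !mxE (bigD1 i) //= !mxE eqxx mulr1.
rewrite [X in _ + X](eq_bigr (fun k => - w i k)); last first.
  by move=> k hk; rewrite !mxE eq_sym (negbTE hk) mulr1.
by rewrite sumrN subrr.
Qed.

Lemma dot_one_lap n (w : 'M[R]_n) v : w^T = w -> dot (one n) (laplacian w *m v) = 0.
Proof. by move=> hw; rewrite dot_mulmxr lap_sym // lap_one dot0l. Qed.

Lemma Hmat_sym n (a : 'cV[R]_n) : (Hmat a)^T = Hmat a.
Proof. by rewrite /Hmat tr_diag_mx. Qed.

Lemma HmatE n (a v : 'cV[R]_n) i : (Hmat a *m v) i 0 = a i 0 * v i 0.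
Proof. by rewrite /Hmat mul_diag_mx !mxE. Qed.

Lemma oneJ n (v : 'cV[R]_n) : one n *m (one n)^T *m v = dot (one n) v *: one n.
Proof.
apply/matrixP => i j; rewrite (ord1 j) -mulmxA !mxE (bigD1 0) //= big1 ?addr0.
  by rewrite !mxE mul1r /dot mulr1 mxE.
by move=> k; rewrite (ord1 k) eqxx.
Qed.

Lemma oneTone k : (const_mx 1 : 'cV[R]_k)^T *m const_mx 1 = (k%:R)%:M.
Proof.
apply/matrixP=> i j; rewrite (ord1 i) (ord1 j) !mxE /=.
under eq_bigr do rewrite !mxE mulr1.
by rewrite sumr_const card_ord.
Qed.

End Aux2.

Lemma UUt (R : realFieldType) k (U : 'M[R]_(k.+1, k)) :
  U^T *m U = 1%:M -> U^T *m (const_mx 1 : 'cV[R]_k.+1) = 0 ->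
  U *m U^T = 1%:M - (k.+1%:R)^-1 *: (const_mx 1 *m (const_mx 1 : 'cV[R]_k.+1)^T).
Proof.
move=> hU h1.
set one := (const_mx 1 : 'cV[R]_k.+1).
pose X := row_mx one U.
pose D : 'M[R]_(1 + k) := block_mx ((k.+1%:R)^-1)%:M 0 0 1%:M.
have hn : (k.+1%:R : R) != 0 by rewrite pnatr_eq0.
have h1' : one^T *m U = 0 by rewrite -(trmxK U) -trmx_mul h1 trmx0.
have e1 : (D *m X^T) *m X = 1%:M.
  rewrite /D /X tr_row_mx mul_block_col !mul0mx addr0 add0r mul1mx.
  rewrite mul_col_row -!mulmxA oneTone h1' h1 hU mulmx0 -scalar_mxM mulVf //.
  by rewrite [in RHS]scalar_mx_block.
have e2 := @mulmx1C _ (1 + k) (D *m X^T) X e1.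
rewrite /X /D mulmxA tr_row_mx in e2.
rewrite mul_row_block !mulmx0 !addr0 add0r mulmx1 mul_row_col in e2.
rewrite -e2 mul_mx_scalar scalemxAl addrC addKr //.
Qed.

Lemma UUt' (R : realFieldType) n (U : 'M[R]_(n, n.-1)) : (0 < n)%N ->
  U^T *m U = 1%:M -> U^T *m (const_mx 1 : 'cV[R]_n) = 0 ->
  U *m U^T = 1%:M - (n%:R)^-1 *: (const_mx 1 *m (const_mx 1 : 'cV[R]_n)^T).
Proof. by case: n U => // k U _; exact: UUt. Qed.

Lemma le_sum_term (R : realFieldType) n (F : 'I_n -> R) i :
  (forall j, 0 <= F j) -> F i <= \sum_j F j.
Proof. by move=> h; rewrite (bigD1 i) //= lerDl sumr_ge0. Qed.

Theorem theorem1 (R : realFieldType) (n : nat) (hn : (2 <= n)%N) (d : R)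
  (a b : 'cV[R]_n) (ha : forall i, 0 < a i 0)
  (w : 'M[R]_n) (hw : weighted_graph w) (hconn : connected_graph w)
  (U : 'M[R]_(n, n.-1))
  (hUorth : U^T *m U = 1%:M) (hUperp : U^T *m (const_mx 1 : 'cV[R]_n) = 0)
  (eps : R) (heps0 : 0 <= eps) (heps1 : eps < 1)
  (hlow : loewner_le (- (eps%:M)) (1%:M - U^T *m laplacian w *m Hmat a *m laplacian w *m U))
  (hup : loewner_le (1%:M - U^T *m laplacian w *m Hmat a *m laplacian w *m U) (eps%:M))
  (q : nat) :
  let L := laplacian w in
  let H := Hmat a in
  exists xs : 'cV[R]_n,
    [/\ csum xs = d,
        (forall x, csum x = d -> fobj a b xs <= fobj a b x),
        (forall y, csum y = d -> (forall x, csum x = d -> fobj a b y <= fobj a b x) -> y = xs),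
        (forall x0, csum x0 = d -> forall k, csum (dana_iter L H b q x0 k) = d) &
        ((exists (P : 'M[R]_n) (c : R),
           [/\ P^T = P, 0 < c, c < 1,
               (forall x, csum x = d -> x != xs -> 0 < qform P (x - xs)) &
               (forall x0, csum x0 = d -> forall k,
                  qform P (dana_iter L H b q x0 k.+1 - xs)
                  <= (1 - c) * qform P (dana_iter L H b q x0 k - xs))]) /\
        (exists (C rho : R),
           [/\ 0 < C, 0 < rho, rho < 1 &
               forall x0, csum x0 = d -> forall k,
                 qform 1%:M (dana_iter L H b q x0 k - xs)
                 <= C * rho ^+ k * qform 1%:M (x0 - xs)]))].
Proof.
move=> L H.
have n0 : (0 < n)%N by apply: leq_trans hn.
set one := (const_mx 1 : 'cV[R]_n).
have hws : w^T = w := proj1 hw.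
have hLs : L^T = L := lap_sym hws.
have hL1 : L *m one = 0 := lap_one w.
have hLone : forall v, dot one (L *m v) = 0 := fun v => dot_one_lap v hws.
have hHs : H^T = H := Hmat_sym a.
have hPU : U *m U^T = 1%:M - n%:R^-1 *: (one *m one^T) := UUt' n0 hUorth hUperp.
have csumE : forall x, csum x = dot one x.
  by move=> x; rewrite dotE /csum; apply: eq_bigr => i _; rewrite mxE mul1r.
have hLUU : L *m U *m U^T = L.
  by rewrite -mulmxA hPU mulmxBr mulmx1 -scalemxAr mulmxA hL1 mul0mx scaler0 subr0.
have hLUU' : forall p (X : 'M[R]_(p, n)), X *m L *m U *m U^T = X *m L.
  by move=> p X; rewrite -!mulmxA (mulmxA L U) hLUU.
have hUUL : U *m U^T *m L = L.
  have hoL : one^T *m L = 0 by rewrite -[L]hLs -trmx_mul hL1 trmx0.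
  by rewrite hPU mulmxBl mul1mx -scalemxAl -mulmxA hoL mulmx0 scaler0 subr0.
have hproj : forall v, dot one v = 0 -> U *m (U^T *m v) = v.
  move=> v hv; rewrite mulmxA hPU mulmxBl mul1mx -scalemxAl oneJ hv.
  by rewrite scale0r scaler0 subr0.
have hUn : forall v, dot (U^T *m v) (U^T *m v) = dot v v - n%:R^-1 * (dot one v) ^+ 2.
  move=> v; rewrite dot_mulmx trmxK mulmxA hPU mulmxBl mul1mx -scalemxAl oneJ.
  by rewrite dotBr !dotZr (dotC v one); ring.
have an0 : forall i, a i 0 != 0 by move=> i; exact: lt0r_neq0.
pose i0 : 'I_n := Ordinal n0.
pose A2 := \sum_i (a i 0)^-1.
pose A1 := \sum_i a i 0.
have A2ge : forall i, (a i 0)^-1 <= A2.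
  by move=> i; rewrite /A2; apply: (@le_sum_term _ _ (fun j => (a j 0)^-1)) => j; rewrite invr_ge0 ltW.
have A1ge : forall i, a i 0 <= A1.
  by move=> i; rewrite /A1; apply: (@le_sum_term _ _ (fun j => a j 0)) => j; rewrite ltW.
have A2pos : 0 < A2 by apply: lt_le_trans (A2ge i0); rewrite invr_gt0.
have A1pos : 0 < A1 by apply: lt_le_trans (A1ge i0).
pose m := A2^-1.
have mpos : 0 < m by rewrite invr_gt0.
have mle : forall i, m <= a i 0.
  move=> i; rewrite -[a i 0]invrK lef_pV2 ?posrE ?invr_gt0 //.
pose nu := (d + \sum_i b i 0 / a i 0) / A2.
pose xs : 'cV[R]_n := \col_i ((nu - b i 0) / a i 0).
have hxs : forall i, a i 0 * xs i 0 + b i 0 = nu.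
  by move=> i; rewrite mxE; field.
have csxs : csum xs = d.
  rewrite /csum; under eq_bigr do rewrite mxE mulrBl.
  rewrite sumrB -mulr_sumr -/A2 /nu divfK ?addrK //; exact: lt0r_neq0.
have hHxs : H *m xs + b = nu *: one.
  by apply/matrixP => i j; rewrite (ord1 j) mxE HmatE hxs !mxE mulr1.
have hLxs : L *m b + L *m H *m xs = 0.
  by rewrite -mulmxA addrC -mulmxDr hHxs -scalemxAr hL1 scaler0.
have fdiff : forall x, fobj a b x - fobj a b xs =
    \sum_i (2^-1 * a i 0 * (x i 0 - xs i 0) ^+ 2) + nu * (csum x - csum xs).
  move=> x; rewrite /fobj /csum -!sumrB mulr_sumr -big_split /=.
  apply: eq_bigr => i _; rewrite -(hxs i); apply: (fun E => E (x i 0) (xs i 0) (a i 0) (b i 0)) => X S A B0 /=; by field.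
have sq_ge0 : forall z : 'cV[R]_n, 0 <= \sum_i (2^-1 * a i 0 * (z i 0 - xs i 0) ^+ 2).
  move=> z; apply: sumr_ge0 => i _; apply: mulr_ge0; last exact: sqr_ge0.
  by rewrite mulr_ge0 // ?invr_ge0 ?ler0n // ltW.
have hHlow : forall v, m * dot v v <= dot v (H *m v).
  move=> v; rewrite !dotE mulr_sumr; apply: ler_sum => i _; rewrite HmatE.
  have := mle i; have := sqr_ge0 (v i 0); rewrite expr2; nra.
have hHup : forall v, dot v (H *m v) <= A1 * dot v v.
  move=> v; rewrite !dotE mulr_sumr; apply: ler_sum => i _; rewrite HmatE.
  have := A1ge i; have := sqr_ge0 (v i 0); rewrite expr2; nra.
have hHH : forall v, dot (H *m v) (H *m v) <= A1 ^+ 2 * dot v v.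
  move=> v; rewrite !dotE mulr_sumr; apply: ler_sum => i _; rewrite !HmatE.
  have h1 : a i 0 * a i 0 <= A1 * A1 by have := A1ge i; have := ha i; nra.
  by rewrite mulrACA expr2; apply: ler_wpM2r h1; rewrite -expr2 sqr_ge0.
pose N := U^T *m L *m H *m L *m U.
pose B := 1%:M - N.
pose T := U^T *m L *m H.
pose S := \sum_(p < q.+1) (1%:M - L *m H *m L) ^+ p.
pose S' := \sum_(p < q.+1) B ^+ p.
have hUM : U^T *m L *m H *m L = N *m U^T by rewrite /N hLUU'.
have hUM2 : U^T *m (1%:M - L *m H *m L) = B *m U^T.
  by rewrite mulmxBr mulmx1 !mulmxA hUM /B mulmxBl mul1mx.
have hpow : forall p, U^T *m (1%:M - L *m H *m L) ^+ p = B ^+ p *m U^T.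
  elim=> [|p ih]; first by rewrite !expr0 mulmx1 mul1mx.
  by rewrite !exprS -!mulmxE mulmxA hUM2 -[B *m U^T *m _]mulmxA ih mulmxA.
have hS : U^T *m S = S' *m U^T.
  rewrite /S /S' mulmx_sumr mulmx_suml; apply: eq_bigr => p _; exact: hpow.
have hNB : N = 1%:M - B by rewrite /B opprB addrCA subrr addr0.
have htel : forall r, N *m \sum_(p < r) B ^+ p = 1%:M - B ^+ r.
  elim=> [|r ih]; first by rewrite big_ord0 mulmx0 expr0 subrr.
  rewrite big_ord_recr /= mulmxDr ih hNB mulmxBl mul1mx [B ^+ r.+1]exprS -mulmxE.
  by rewrite addrA subrK.
have hstep : forall x, T *m (dana_step L H b q x - xs) = B ^+ q.+1 *m (T *m (x - xs)).
  move=> x.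
  have hg : L *m b + L *m H *m x = L *m H *m (x - xs).
    by rewrite mulmxBr -[L *m b](addrK (L *m H *m xs)) hLxs sub0r addrC.
  have e1 : T *m (L *m S *m (L *m H *m (x - xs))) = N *m S' *m (T *m (x - xs)).
    by rewrite /T !mulmxA hUM -(mulmxA N) hS !mulmxA.
  rewrite /dana_step hg -/S addrAC mulmxBr e1 -{1}[T *m (x - xs)]mul1mx -mulmxBl.
  by rewrite /S' htel opprB addrC subrK.
have hNs : N^T = N by rewrite /N !trmx_mul !trmxK hLs hHs !mulmxA.
have hBs : B^T = B by rewrite /B linearB /= trmx1 hNs.
have hp : psd (B + eps%:M) by move: hlow; rewrite /loewner_le opprK.
have hm : psd (eps%:M - B) by exact: hup.
have hBk : forall k y, dot (B ^+ k *m y) (B ^+ k *m y) <= (eps ^+ 2) ^+ k * dot y y.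
  elim=> [|k ih] y; first by rewrite expr0 mul1mx expr0 mul1r.
  rewrite exprS -mulmxE -mulmxA.
  apply: le_trans (contract hBs heps0 hp hm _) _.
  by rewrite [(eps ^+ 2) ^+ k.+1]exprS -mulrA ler_wpM2l ?sqr_ge0.
pose V := fun e : 'cV[R]_n => dot (T *m e) (T *m e).
have hVq : forall e, qform (T^T *m T) e = V e.
  by move=> e; rewrite qformE -mulmxA dot_mulmxr trmxK.
have hV : forall e, V e = dot (L *m (H *m e)) (L *m (H *m e)).
  by move=> e; rewrite /V /T -!mulmxA hUn hLone expr2 !mulr0 subr0.
have hNu : forall e, dot (U^T *m (H *m e)) (N *m (U^T *m (H *m e))) =
    dot (L *m (H *m e)) (H *m (L *m (H *m e))).
  move=> e; rewrite dot_mulmx trmxK /N !mulmxA hLUU' hUUL.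
  by rewrite -!mulmxA dot_mulmxr hLs.
have hUnle : forall v, dot (U^T *m v) (U^T *m v) <= dot v v.
  move=> v; rewrite hUn.
  have : 0 <= n%:R^-1 * (dot one v) ^+ 2 by rewrite mulr_ge0 ?invr_ge0 ?ler0n ?sqr_ge0.
  lra.
have hUeq : forall v, dot one v = 0 -> dot (U^T *m v) (U^T *m v) = dot v v.
  by move=> v hv; rewrite hUn hv expr2 !mulr0 subr0.
have hupb : forall e, m * V e <= (1 + eps) * A1 ^+ 2 * dot e e.
  move=> e; set u := U^T *m (H *m e).
  have h1 := hHlow (L *m (H *m e)).
  rewrite -hV -hNu -/u in h1.
  have h2 : dot u (N *m u) <= (1 + eps) * dot u u.
    have := hp u; rewrite qformE mulmxDl mul_scalar_mx dotDr dotZr /B mulmxBl mul1mx dotBr.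
    lra.
  have h3 : dot u u <= dot (H *m e) (H *m e) := hUnle _.
  have h4 := hHH e.
  apply: le_trans h1 _; apply: le_trans h2 _; rewrite -mulrA; apply: ler_wpM2l; first lra.
  exact: le_trans h3 h4.
have hlowb : forall e, dot one e = 0 -> (1 - eps) * m ^+ 2 * dot e e <= A1 * V e.
  move=> e he; set u := U^T *m (H *m e); set z := U^T *m e.
  have h1 : (1 - eps) * dot u u <= dot u (N *m u).
    have := hm u; rewrite qformE mulmxBl mul_scalar_mx dotBr dotZr /B mulmxBl mul1mx dotBr.
    lra.
  have h2 : dot u (N *m u) <= A1 * V e by rewrite hNu hV; exact: hHup.
  have h3 : m * dot e e <= dot z u.
    have -> : dot z u = dot e (H *m e) by rewrite /z /u dot_mulmxr trmxK hproj.
    exact: hHlow.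
  have hz : dot z z = dot e e by rewrite hUeq.
  have h4 : 0 <= dot (m *: z - u) (m *: z - u) := dot_ge0 _.
  rewrite dotBl !dotBr !dotZl !dotZr (dotC u z) hz in h4.
  have h3' : m * (m * dot e e) <= m * dot z u by rewrite ler_wpM2l // ltW.
  have h5 : m ^+ 2 * dot e e <= dot u u by rewrite expr2 -mulrA; lra.
  apply: le_trans h2; apply: le_trans h1; rewrite -mulrA ler_wpM2l //; lra.
have csum_step : forall x, csum (dana_step L H b q x) = csum x.
  by move=> x; rewrite /dana_step !csumE dotBr -mulmxA hLone subr0.
have csum_iter : forall x0 k, csum (dana_iter L H b q x0 k) = csum x0.
  by move=> x0; elim=> [|k ih] //; rewrite /dana_iter iterS csum_step.
pose r := (eps ^+ 2) ^+ q.+1.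
have hr0 : 0 <= r by rewrite exprn_ge0 ?sqr_ge0.
have he2 : eps ^+ 2 < 1 by rewrite expr2; nra.
have hr1 : r < 1 by rewrite /r exprn_ilt1 ?sqr_ge0.
pose c := (1 - r) / 2.
have hc0 : 0 < c by rewrite /c divr_gt0 ?ltr0n // subr_gt0.
have hc1 : c < 1 by rewrite /c ltr_pdivrMr ?ltr0n //; lra.
have hrc : r <= 1 - c by rewrite /c; lra.
have hVstep : forall x, V (dana_step L H b q x - xs) <= (1 - c) * V (x - xs).
  move=> x; rewrite /V hstep -/(V (x - xs)).
  apply: le_trans (hBk _ _) _; rewrite -/r ler_wpM2r //; exact: dot_ge0.
have hVk : forall x0 k, V (dana_iter L H b q x0 k - xs) <= (1 - c) ^+ k * V (x0 - xs).
  move=> x0; elim=> [|k ih]; first by rewrite expr0 mul1r.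
  rewrite /dana_iter iterS -/(dana_iter L H b q x0 k).
  apply: le_trans (hVstep _) _; rewrite exprS -mulrA ler_wpM2l //; lra.
have hone0 : forall x, csum x = d -> dot one (x - xs) = 0.
  by move=> x hx; rewrite dotBr -!csumE hx csxs subrr.
exists xs; split => //.
- move=> x hx; rewrite -subr_ge0 fdiff hx csxs subrr mulr0 addr0; exact: sq_ge0.
- move=> y hy hopt.
  have h := hopt xs csxs.
  have := fdiff y; rewrite hy csxs subrr mulr0 addr0 => e.
  have h0 : \sum_i (2^-1 * a i 0 * (y i 0 - xs i 0) ^+ 2) = 0.
    apply/eqP; rewrite eq_le sq_ge0 andbT -e subr_le0 //.
  have hi : forall i : 'I_n, true -> 0 <= 2^-1 * a i 0 * (y i 0 - xs i 0) ^+ 2.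
    move=> i _; apply: mulr_ge0; last exact: sqr_ge0.
    by rewrite mulr_ge0 // ?invr_ge0 ?ler0n // ltW.
  apply/matrixP => i j; rewrite (ord1 j); apply/eqP; rewrite -subr_eq0.
  have := psumr_eq0P hi h0 (i := i) isT.
  move/eqP; rewrite !mulf_eq0 (negbTE (an0 i)) invr_eq0 pnatr_eq0 /= orbb.
  by [].
- by move=> x0 hx0 k; rewrite csum_iter.
split.
- exists (T^T *m T), c; split => //.
  + by rewrite trmx_mul trmxK.
  + move=> x hx hne; rewrite hVq.
    have hx0 := hone0 x hx.
    have := hlowb _ hx0.
    have : 0 < dot (x - xs) (x - xs) by apply: dot_gt0; rewrite subr_eq0.
    move=> h1 h2.
    have : 0 < (1 - eps) * m ^+ 2 * dot (x - xs) (x - xs).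
      by rewrite mulr_gt0 // mulr_gt0 ?exprn_gt0 // subr_gt0.
    move=> h3.
    have : 0 < A1 * V (x - xs) by apply: lt_le_trans h2.
    by rewrite pmulr_rgt0.
  + move=> x0 hx0 k; rewrite !hVq /dana_iter iterS -/(dana_iter L H b q x0 k).
    exact: hVstep.
- pose K := (1 - eps) * m ^+ 2.
  have Kpos : 0 < K by rewrite mulr_gt0 ?exprn_gt0 // subr_gt0.
  exists (A1 / K * ((1 + eps) * A1 ^+ 2 / m)), (1 - c); split.
  + by rewrite mulr_gt0 // ?divr_gt0 // ?mulr_gt0 // ?exprn_gt0 //; lra.
  + lra.
  + lra.
  move=> x0 hx0 k.
  rewrite !qformE !mul1mx.
  set Ek := dot _ _; set E0 := dot (x0 - xs) _.
  have hk1 : K * Ek <= A1 * V (dana_iter L H b q x0 k - xs).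
    apply: hlowb; apply: hone0; by rewrite csum_iter.
  have hk2 := hVk x0 k.
  have hk3 := hupb (x0 - xs).
  have hE0 : 0 <= E0 := dot_ge0 _.
  have hrk : 0 <= (1 - c) ^+ k by rewrite exprn_ge0 //; lra.
  rewrite -(ler_pM2l (mulr_gt0 Kpos mpos)).
  have -> : K * m * (A1 / K * ((1 + eps) * A1 ^+ 2 / m) * (1 - c) ^+ k * E0) =
      A1 * (1 - c) ^+ k * ((1 + eps) * A1 ^+ 2 * E0).
    by field; rewrite lt0r_neq0 //= lt0r_neq0.
  have s1 : m * (K * Ek) <= m * (A1 * V (dana_iter L H b q x0 k - xs)).
    by rewrite ler_wpM2l // ltW.
  have s2 : A1 * V (dana_iter L H b q x0 k - xs) <= A1 * ((1 - c) ^+ k * V (x0 - xs)).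
    by rewrite ler_wpM2l // ltW.
  have s3 : A1 * (1 - c) ^+ k * (m * V (x0 - xs)) <=
      A1 * (1 - c) ^+ k * ((1 + eps) * A1 ^+ 2 * E0).
    by rewrite ler_wpM2l // mulr_ge0 // ltW.
  have s2' : m * (A1 * V (dana_iter L H b q x0 k - xs)) <=
      m * (A1 * ((1 - c) ^+ k * V (x0 - xs))) by rewrite ler_wpM2l // ltW.
  apply: le_trans s3; rewrite mulrAC -mulrA.
  have -> : K * (Ek * m) = m * (K * Ek) by ring.
  apply: (le_trans s1); apply: (le_trans s2').
  by rewrite le_eqVlt; apply/orP; left; apply/eqP; ring.
Qed.
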